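(* Let $X$ be a sieve-complete space and let $F\colon(\mathcal{K}(X),\tau^+_V)\to\mathcal{K}(Y)$ be upper semi-continuous and set tri-quotient. Then $Y$ is sieve-complete.
   Context: All spaces are completely regular. $\mathcal{K}(X)$ is the set of compact subsets of $X$; $\tau^+_V$ is the upper Vietoris topology on $\mathcal{K}(X)$, generated by the sets $\{H\in\mathcal{K}(X):H\subset U\}$, $U$ open in $X$. $F$ upper semi-continuous means: for every $K$ and every open $V\supset F(K)$ there is a $\tau^+_V$-neighborhood $\mathcal{O}$ of $K$ with $F(H)\subset V$ for all $H\in\mathcal{O}$. $F$ is set tri-quotient if there is $s\colon\mathcal{T}(X)\to\mathcal{T}(Y)$ (maps from open sets of $X$ to open sets of $Y$) with: (str1) $s(U)\subset\bigcup\{F(K):K\in\mathcal{K}(X),K\subset U\}$; (str2) $s(X)=Y$; (str3) $U\subset V\Rightarrow s(U)\subset s(V)$; (str4) if $y\in s(U)$ and $\mathcal{W}$ is a cover of $\bigcup\{K\in F^{-1}(y):K\subset U\}$ by open subsets of $X$, then $y\in s(\bigcup\mathcal{E})$ for some finite $\mathcal{E}\subset\mathcal{W}$, where $F^{-1}(y)=\{K:y\in F(K)\}$. A sieve on $X$ is a sequence of open covers $\{U_\alpha:\alpha\in A_n\}_{n\in\mathbb{N}}$ with maps $\pi_n\colon A_{n+1}\to A_n$ such that $U_\alpha=\bigcup\{U_\beta:\beta\in\pi_n^{-1}(\alpha)\}$; it is complete if for every sequence $(\alpha_n)$ with $\alpha_n\in A_n$, $\pi_n(\alpha_{n+1})=\alpha_n$,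 every filter base meshing with $\{U_{\alpha_n}\}$ has a cluster point; a space with a complete sieve is sieve-complete. *)

(* Defs.v *)
From Stdlib Require Rdefinitions.
From HB Require Import structures.
From mathcomp Require Import all_boot all_order all_algebra.
From mathcomp Require Import all_classical all_reals all_analysis.
From mathcomp Require Import Rstruct Rstruct_topology.
Set Implicit Arguments. Unset Strict Implicit. Unset Printing Implicit Defensive.
Import Order.TTheory GRing.Theory Num.Theory.
Local Open Scope classical_set_scope.

Definition completely_regular (X : topologicalType) : Prop :=
  hausdorff_space X /\
  forall (A : set X) (x : X), closed A -> ~ A x ->
    exists f : X -> Rdefinitions.R,
      continuous f /\ f x = 0%R /\ (forall a, A a -> f a = 1%R).

Record cpt (X : topologicalType) := Cpt {
  cset :> set X;
  cset_compact : compact cset }.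

(* Upper semi-continuity of F : (K(X), tau^+_V) -> K(Y).  The sets
   {H in K(X) | H subset U}, U open, form a base of tau^+_V, so a
   tau^+_V-neighbourhood of K contains such a set with K subset U. *)
Definition usc (X Y : topologicalType) (F : cpt X -> cpt Y) : Prop :=
  forall (K : cpt X) (V : set Y), open V -> (F K : set Y) `<=` V ->
    exists U : set X, [/\ open U, (K : set X) `<=` U &
      forall H : cpt X, (H : set X) `<=` U -> (F H : set Y) `<=` V].

Definition Fimg (X Y : topologicalType) (F : cpt X -> cpt Y) (U : set X)
  : set Y :=
  [set y | exists K : cpt X, (K : set X) `<=` U /\ (F K : set Y) y].

Definition Fpre (X Y : topologicalType) (F : cpt X -> cpt Y) (y : Y)
  (U : set X) : set X :=
  [set x | exists K : cpt X, [/\ (F K : set Y) y, (K : set X) `<=` U & (K : set X) x]].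

(* F is set tri-quotient: s maps open sets of X to open sets of Y
   (only its values on open sets matter). *)
Definition set_tri_quotient (X Y : topologicalType) (F : cpt X -> cpt Y)
  : Prop :=
  exists s : set X -> set Y,
    [/\ (forall U, open U -> open (s U)),
        (* str1 *) (forall U, open U -> s U `<=` Fimg F U),
        s setT = setT,
        (forall U V, open U -> open V -> U `<=` V -> s U `<=` s V) &
        (* str4 *) (forall (U : set X) (y : Y) (W : set (set X)),
            open U -> s U y ->
            (forall w, W w -> open w) ->
            Fpre F y U `<=` \bigcup_(w in W) w ->
            exists E : set (set X),
              [/\ finite_set E, E `<=` W & s (\bigcup_(e in E) e) y])].

Definition is_sieve (X : topologicalType) (A : nat -> Type)
  (U : forall n, A n -> set X) (pi : forall n, A n.+1 -> A n) : Prop :=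
  [/\ (forall n a, open (U n a)),
      (forall n, \bigcup_(a in [set: A n]) U n a = setT) &
      (forall n a, U n a = \bigcup_(b in [set b | pi n b = a]) U n.+1 b)].

Definition filter_base (X : Type) (B : set (set X)) : Prop :=
  [/\ B !=set0, (forall b, B b -> b !=set0) &
      (forall b1 b2, B b1 -> B b2 -> exists2 b3, B b3 & b3 `<=` b1 `&` b2)].

Definition meshes (X : Type) (B : set (set X)) (C : set (set X)) : Prop :=
  forall b c, B b -> C c -> b `&` c !=set0.

Definition cluster_point (X : topologicalType) (B : set (set X)) (x : X)
  : Prop := forall b, B b -> closure b x.

Definition complete_sieve (X : topologicalType) (A : nat -> Type)
  (U : forall n, A n -> set X) (pi : forall n, A n.+1 -> A n) : Prop :=
  is_sieve U pi /\
  forall alpha : forall n, A n, (forall n, pi n (alpha n.+1) = alpha n) ->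
    forall B : set (set X), filter_base B ->
      meshes B [set U n (alpha n) | n in [set: nat]] ->
      exists x, cluster_point B x.

Definition sieve_complete (X : topologicalType) : Prop :=
  exists (A : nat -> Type) (U : forall n, A n -> set X)
         (pi : forall n, A n.+1 -> A n), complete_sieve U pi.

(* Main.v *)
Require Import Defs.
From mathcomp Require Import all_boot all_classical all_analysis.
From mathcomp Require Import all_order all_algebra all_reals.
From mathcomp Require Import Rstruct Rstruct_topology lra finmap.
From Stdlib Require Import Eqdep_dec List Lia.
From mathcomp Require Import zify.
Import Order.TTheory GRing.Theory Num.Theory.
Unset Printing Implicit Defensive.
Local Open Scope classical_set_scope.

Section KC.
Variables (X : topologicalType) (A : nat -> Type) (U : forall n, A n -> set X)
  (pi : forall n, A n.+1 -> A n).
Hypothesis hS : complete_sieve U pi.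
Variable E : forall n, list (A n).
Hypothesis hE : forall n b, List.In b (E n.+1) -> List.In (pi n b) (E n).

Definition UE n := \bigcup_(a in [set a | List.In a (E n)]) U n a.

Definition node := {k : nat & A k}.
Definition lev (x : node) := projT1 x.
Definition Un (x : node) := U (projT1 x) (projT2 x).
Definition En (x : node) := List.In (projT2 x) (E (projT1 x)).
Definition par (x : node) : node :=
  match x with existT 0 a => existT _ 0 a | existT k.+1 a => existT _ k (pi k a) end.

Lemma injT n (a b : A n) : existT A n a = existT A n b -> a = b.
Proof. apply: inj_pair2_eq_dec; exact: PeanoNat.Nat.eq_dec. Qed.

Lemma U_pi n b : U n.+1 b `<=` U n (pi n b).
Proof.
case: hS => [[_ _ hU] _] x Hx; rewrite (hU n (pi n b)); by exists b.
Qed.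

Lemma lev_par x : lev (par x) = (lev x).-1.
Proof. by case: x => [[|k] a]. Qed.

Lemma Un_par x : Un x `<=` Un (par x).
Proof. case: x => [[|k] a] //=; exact: U_pi. Qed.

Lemma En_par x : En x -> En (par x).
Proof. case: x => [[|k] a] //=; exact: hE. Qed.

Lemma lev_iter j x : lev (iter j par x) = lev x - j.
Proof. elim: j => [|j IH]; first by rewrite subn0. by rewrite iterS lev_par IH subnS. Qed.

Lemma Un_iter j x : Un x `<=` Un (iter j par x).
Proof. elim: j => [//|j IH]; rewrite iterS; exact: (subset_trans IH (@Un_par _)). Qed.

Lemma En_iter j x : En x -> En (iter j par x).
Proof. move=> h; elim: j => [//|j IH]; rewrite iterS; exact: En_par. Qed.

Lemma UE_node k p : UE k p -> exists y, [/\ lev y = k, En y & Un y p].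
Proof. case=> a Ha Hp; by exists (existT A k a). Qed.

Lemma node_lev (x : node) k : lev x = k -> exists a : A k, x = existT A k a.
Proof. case: x => k' a /= <-; by exists a. Qed.

Variable D : set (set X).
Hypothesis hlev : forall k, exists d, D d /\ d `<=` UE k.
Hypothesis hDne : forall d, D d -> d !=set0.
Hypothesis hDdir : forall d1 d2, D d1 -> D d2 -> exists d3, D d3 /\ d3 `<=` d1 `&` d2.

Lemma comb (R : node -> set X -> nat -> Prop) (S : list node) :
  (forall x, List.In x S -> exists d, D d /\ exists k, R x d k) ->
  exists d, D d /\ exists K, forall x, List.In x S ->
     exists dx kx, [/\ R x dx kx, d `<=` dx & (kx <= K)%N].
Proof.
elim: S => [|x S IH] H.
  have [d [Dd _]] := hlev 0; exists d; split => // ; by exists 0%N.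
have [|d [Dd [K HK]]] := IH; first by move=> y Hy; apply: H; right.
have [dx [Ddx [kx Rx]]] := H x (or_introl erefl).
have [d3 [Dd3 sd3]] := hDdir d dx Dd Ddx.
exists d3; split => //; exists (maxn K kx) => y [<-|Hy].
  exists dx, kx; split => //; [by move=> z /sd3 [] | exact: leq_maxr].
have [dy [ky [Ry sdy lky]]] := HK y Hy.
exists dy, ky; split => //; first by move=> z /sd3 [/sdy].
exact: (leq_trans lky (leq_maxl _ _)).
Qed.

Definition good (x : node) := En x /\ forall d, D d -> forall k, (lev x <= k)%N ->
  d `<=` UE k -> exists y, [/\ lev y = k, En y, iter (k - lev x) par y = x &
                      d `&` Un y !=set0].

Lemma pick_good n (S : list node) :
  (forall x, List.In x S -> lev x = n /\ En x) ->
  (forall d, D d -> forall k, (n <= k)%N -> d `<=` UE k ->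
     exists y, [/\ lev y = k, En y, List.In (iter (k - n) par y) S & d `&` Un y !=set0]) ->
  exists x, List.In x S /\ good x.
Proof.
move=> HS Hyp; apply: contrapT => Hn.
have H1 : forall x, List.In x S -> exists d, D d /\ exists k,
   [/\ (n <= k)%N, d `<=` UE k & forall y, lev y = k -> En y ->
        iter (k - n) par y = x -> d `&` Un y = set0].
  move=> x Sx; have [lx Ex] := HS x Sx.
  have : ~ good x by move=> gx; apply: Hn; exists x.
  move=> /not_andP [//|] /existsNP [d /not_implyP [Dd /existsNP [k /not_implyP [lk
    /not_implyP [sdk Hk]]]]].
  exists d; split => //; exists k; split => //; first by rewrite -lx.
  move=> y ly Ey iy; apply/eqP/negPn/negP => /set0P ne; apply: Hk.
  by exists y; rewrite lx; split.
have [d [Dd [K HK]]] := comb _ _ H1.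
have [d1 [Dd1 sd1]] := hlev (maxn n K).
have [d' [Dd' sd']] := hDdir _ _ Dd Dd1.
have [y [ly Ey Sy ne]] := Hyp d' Dd' (maxn n K) (leq_maxl _ _)
  (fun z h => sd1 z (proj2 (sd' z h))).
have [dx [kx [[nkx sdx Hx] sd lk]]] := HK _ Sy.
pose y' := iter (maxn n K - kx) par y.
have ly' : lev y' = kx.
  rewrite lev_iter ly subKn //; exact: (leq_trans lk (leq_maxr _ _)).
have : dx `&` Un y' = set0.
  apply: Hx => //; first exact: En_iter.
  rewrite /y' -iterD; congr iter.
  have := leq_trans lk (leq_maxr n K); move: nkx; clear; lia.
apply/eqP/set0P; case: ne => p [/sd' [/sd dp _] up]; exists p; split => //.
exact: Un_iter.
Qed.

Lemma good_root : exists x, lev x = 0%N /\ good x.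
Proof.
pose S := List.map (existT A 0%N) (E 0).
have H1 : forall x, List.In x S -> lev x = 0%N /\ En x.
  move=> x /in_map_iff [a [<- Ha]]; by split.
have H2 : forall d, D d -> forall k, (0 <= k)%N -> d `<=` UE k ->
     exists y, [/\ lev y = k, En y, List.In (iter (k - 0) par y) S & d `&` Un y !=set0].
  move=> d Dd k _ sd; have [p dp] := hDne _ Dd.
  have [y [ly Ey Uy]] := UE_node _ _ (sd p dp).
  exists y; split => //; last by exists p.
  have ly0 : lev (iter (k - 0) par y) = 0%N by rewrite lev_iter ly subn0 subnn.
  have [a ea] := node_lev _ _ ly0; rewrite ea; apply: in_map.
  have := En_iter (k - 0) _ Ey; by rewrite ea.
have [x [Sx gx]] := pick_good 0 S H1 H2.
exists x; split => //; move: Sx => /in_map_iff [a [<- _]] //.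
Qed.

Lemma good_child x : good x -> exists z, [/\ good z, lev z = (lev x).+1 & par z = x].
Proof.
move=> gx; case: x gx => n a gx.
pose S := List.map (existT A n.+1) (List.filter (fun b => `[< pi n b = a >]) (E n.+1)).
have H1 : forall x, List.In x S -> lev x = n.+1 /\ En x.
  move=> z /in_map_iff [b [<- /filter_In [Hb _]]]; by split.
have H2 : forall d, D d -> forall k, (n.+1 <= k)%N -> d `<=` UE k ->
     exists y, [/\ lev y = k, En y, List.In (iter (k - n.+1) par y) S & d `&` Un y !=set0].
  move=> d Dd k lk sd.
  have [y [ly Ey it ne]] := (proj2 gx) d Dd k (ltnW lk) sd.
  exists y; split => //.
  have lz : lev (iter (k - n.+1) par y) = n.+1.
    by rewrite lev_iter ly subKn.
  have [b eb] := node_lev _ _ lz; rewrite eb; apply: in_map; apply/filter_In; split.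
    by have := En_iter (k - n.+1) _ Ey; rewrite eb.
  apply/asboolP; apply: injT.
  have : par (iter (k - n.+1) par y) = existT A n a.
    rewrite -iterS -subSn //= subSS; exact: it.
  by rewrite eb.
have [z [Sz gz]] := pick_good n.+1 S H1 H2.
exists z; move: Sz gz => /in_map_iff [b [<- /filter_In [_ /asboolP Hb]]] gz; split => //; by rewrite -Hb.
Qed.

Lemma KC : exists x, cluster_point D x.
Proof.
have next_ex : forall x, exists z, good x -> [/\ good z, lev z = (lev x).+1 & par z = x].
  move=> x; case: (pselect (good x)) => [gx|ngx]; last by exists x.
  have [z Hz] := good_child _ gx; by exists z.
have [next Hnext] := choice next_ex.
have [x0 [l0 g0]] := good_root.
pose xs n := iter n next x0.
have Hxs : forall n, good (xs n) /\ lev (xs n) = n.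
  elim => [//|n [gn ln]]; rewrite /xs iterS; have [g l _] := Hnext _ gn.
  by split => //; rewrite l -/(xs n) ln.
have Hpar : forall n, par (xs n.+1) = xs n.
  by move=> n; rewrite /xs iterS; have [_ _ ->] := Hnext _ (proj1 (Hxs n)).
have hal : forall n, exists a : A n, xs n = existT A n a.
  move=> n; exact: node_lev _ _ (proj2 (Hxs n)).
pose alpha n := projT1 (cid (hal n)).
have ealpha : forall n, xs n = existT A n (alpha n).
  move=> n; rewrite /alpha; case: (cid (hal n)) => //.
case: hS => _ /(_ alpha); apply.
- move=> n; apply: injT; rewrite -ealpha -Hpar ealpha //.
- split.
  + have [d [Dd _]] := hlev 0; by exists d.
  + exact: hDne.
  + move=> b1 b2 D1 D2; have [d3 [? ?]] := hDdir _ _ D1 D2; by exists d3.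
- move=> d c Dd [n _ <-].
  have [d1 [Dd1 sd1]] := hlev n.
  have [d' [Dd' sd']] := hDdir _ _ Dd Dd1.
  have [gn ln] := Hxs n.
  have [y [ly _ it [p [dp up]]]] := (proj2 gn) d' Dd' n (eq_leq ln)
     (fun z h => sd1 z (proj2 (sd' z h))).
  move: it; rewrite ln subnn /= => ey.
  exists p; split; first exact: (proj1 (sd' p dp)).
  by move: up; rewrite ey ealpha.
Qed.

End KC.

Lemma cpt_eq (X : topologicalType) (K1 K2 : cpt X) : (K1 : set X) = K2 -> K1 = K2.
Proof.
case: K1 K2 => [s1 c1] [s2 c2] /= e; subst s2; congr Cpt; exact: Prop_irrelevance.
Qed.

Definition cpt0 (X : topologicalType) : cpt X := Cpt (@compact0 X).

Section FIN.
Variables (X Y : topologicalType) (F : cpt X -> cpt Y).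
Hypothesis hF : usc F.
Variable B : set (set Y).
Hypothesis hB : filter_base B.

Lemma FIN (K0 : cpt X) :
  (forall W, open W -> (K0 : set X) `<=` W -> forall b, B b ->
      exists K : cpt X, (K : set X) `<=` W /\ (F K : set Y) `&` b !=set0) ->
  exists y, cluster_point B y.
Proof.
move=> P; case: hB => [[b0 Bb0] bne bdir].
pose T b := (F K0 : set Y) `&` closure b.
have Tne : forall b, B b -> T b !=set0.
  move=> b Bb; apply: contrapT => /set0P /negP; rewrite negbK => /eqP T0.
  have sub : (F K0 : set Y) `<=` ~` closure b.
    move=> y Fy cy; have : T b y by split.
    by rewrite T0.
  have [W [oW KW HW]] := hF K0 _ (closed_openC (@closed_closure _ b)) sub.
  have [K [KW' [y [Fy yb]]]] := P W oW KW b Bb.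
  exact: (HW K KW' y Fy (subset_closure yb)).
pose G := filter_from B T.
have GF : ProperFilter G.
  apply: filter_from_proper; last exact: Tne.
  apply: filter_from_filter; first by exists b0.
  move=> i j Bi Bj; have [k Bk sk] := bdir i j Bi Bj.
  have Tmono : forall u v, u `<=` v -> T u `<=` T v.
    by move=> u v uv z [Fz cz]; split => //; exact: (closureS uv cz).
  exists k => // y Ty; split.
  - by apply: (Tmono k) Ty => z /sk [].
  - by apply: (Tmono k) Ty => z /sk [].
have GK : G (F K0 : set Y) by exists b0 => // y [].
have [y [_ cly]] := (@cset_compact _ (F K0)) G GF GK.
exists y => b Bb.
move: cly; rewrite clusterE => /(_ (T b)) cl.
have : closure (T b) y by apply: cl; exists b.
move=> /(closureS (fun z (h : T b z) => proj2 h)).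
by rewrite -(proj1 (closure_id _) (@closed_closure _ b)).
Qed.
End FIN.

Section MX.
Variables (X Y : topologicalType) (F : cpt X -> cpt Y).
Hypothesis hX : completely_regular X.
Hypothesis hF : usc F.
Variables (A : nat -> Type) (U : forall n, A n -> set X) (pi : forall n, A n.+1 -> A n).
Hypothesis hS : complete_sieve U pi.
Variable E : forall n, list (A n).
Hypothesis hE : forall n b, List.In b (E n.+1) -> List.In (pi n b) (E n).
Variable s : set X -> set Y.
Hypothesis hs1 : forall V, open V -> s V `<=` Fimg F V.
Variable B : set (set Y).
Hypothesis hB : filter_base B.
Local Notation UEn := (UE X A U E).
Hypothesis hmesh : forall b n, B b -> b `&` s (UEn n) !=set0.

Lemma UE_open n : open (UEn n).
Proof. apply: bigcup_open => a _; case: hS => [[hO _ _] _]; exact: hO. Qed.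

Lemma UE_S n : UEn n.+1 `<=` UEn n.
Proof.
move=> x [a Ha Ux]; exists (pi n a); first exact: hE.
exact: (@U_pi X A U pi hS n a).
Qed.

Lemma UE_mono m n : (n <= m)%N -> UEn m `<=` UEn n.
Proof.
elim: m => [|m IH]; first by rewrite leqn0 => /eqP ->.
rewrite leq_eqVlt => /orP [/eqP -> //|]; rewrite ltnS => /IH h.
exact: (subset_trans (@UE_S m) h).
Qed.

Theorem MX : exists y, cluster_point B y.
Proof.
have [[b1 Bb1] bne bdir] := hB.
case: (pselect (forall b, B b -> (F (cpt0 X) : set Y) `&` b !=set0)) => [H0|].
  apply: (@FIN X Y F hF B hB (cpt0 X)) => W _ _ b Bb; exists (cpt0 X); split => //.
  exact: H0.
move=> /existsNP [b0 /not_implyP [Bb0 nb0]].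
pose H b n := [set x | exists K : cpt X, [/\ (K : set X) `<=` UEn n,
   (F K : set Y) `&` (b `&` b0) !=set0 & (K : set X) x]].
have Hsub : forall b n, H b n `<=` UEn n.
  by move=> b n x [K [KU _ Kx]]; exact: KU.
have Hmono : forall b b' n n', b' `<=` b -> (n <= n')%N -> H b' n' `<=` H b n.
  move=> b b' n n' sb ln x [K [KU [y [Fy [b'y b0y]]] Kx]]; exists K; split => //.
  - exact: (subset_trans KU (UE_mono _ _ ln)).
  - by exists y; split => //; split => //; exact: sb.
have Hne : forall b n, B b -> H b n !=set0.
  move=> b n Bb; have [b' Bb' sb'] := bdir b b0 Bb Bb0.
  have [y [b'y sy]] := hmesh b' n Bb'.
  have [K [KU Fy]] := hs1 (UEn n) (UE_open n) y sy.
  case: (pselect ((K : set X) = set0)) => [K0|/eqP/set0P [x Kx]].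
    exfalso; apply: nb0; exists y; split => //; last exact: (proj2 (sb' y b'y)).
    by move: Fy; rewrite (@cpt_eq X K (cpt0 X) K0).
  exists x, K; split => //; exists y; split => //; exact: sb'.
pose K0s := [set x | forall b, B b -> forall n, closure (H b n) x].
have P : forall W, open W -> K0s `<=` W -> forall b, B b ->
    exists K : cpt X, (K : set X) `<=` W /\ (F K : set Y) `&` b !=set0.
  move=> W oW KW b Bb; apply: contrapT => nP.
  pose D := [set d | exists b' n, [/\ B b', b' `<=` b & d = H b' n `\` W]].
  have hlev : forall k, exists d, D d /\ d `<=` UEn k.
    move=> k; exists (H b k `\` W); split; first by exists b, k; split.
    by move=> z [/Hsub].
  have hne : forall d, D d -> d !=set0.
    move=> d [b' [n [Bb' sb' ->]]]; have [x [K [KU FK Kx]]] := Hne b' n Bb'.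
    have nKW : ~ ((K : set X) `<=` W).
      move=> KW'; apply: nP; exists K; split => //.
      case: FK => y [Fy [b'y _]]; exists y; split => //; exact: sb'.
    move: nKW => /existsNP [x' /not_implyP [Kx' nW]].
    by exists x'; split => //; exists K.
  have hdir : forall d1 d2, D d1 -> D d2 -> exists d3, D d3 /\ d3 `<=` d1 `&` d2.
    move=> d1 d2 [c1 [n1 [Bc1 sc1 ->]]] [c2 [n2 [Bc2 sc2 ->]]].
    have [c3 Bc3 sc3] := bdir c1 c2 Bc1 Bc2.
    exists (H c3 (maxn n1 n2) `\` W); split.
      exists c3, (maxn n1 n2); split => // z /sc3 [/sc1 //].
    move=> z [Hz nWz]; split; split => //.
    - by apply: (Hmono c1 c3 n1 (maxn n1 n2) _ (leq_maxl _ _)) Hz => t /sc3 [].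
    - by apply: (Hmono c2 c3 n2 (maxn n1 n2) _ (leq_maxr _ _)) Hz => t /sc3 [].
  have [x clx] := @KC X A U pi hS E hE D hlev hne hdir.
  have xK : K0s x.
    move=> c Bc n; have [c3 Bc3 sc3] := bdir c b Bc Bb.
    have Dc3 : D (H c3 n `\` W).
      by exists c3, n; split => // z /sc3 [].
    have sub : H c3 n `\` W `<=` H c n.
      by move=> z [Hz _]; apply: (Hmono c c3 n n _ (leqnn n)) Hz => t /sc3 [].
    exact: (closureS sub (clx _ Dc3)).
  have Wx := KW x xK.
  have : closure (H b 0 `\` W) x by apply: clx; exists b, 0%N; split.
  move=> /(closureS (fun z (h : (H b 0 `\` W) z) => proj2 h)).
  by rewrite -(proj1 (closure_id _) (open_closedC oW)).
have cK : compact K0s.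
  move=> G GF GK.
  pose D := [set d | exists b n Oo, [/\ B b, open Oo, G Oo & d = H b n `&` Oo]].
  have hlev : forall k, exists d, D d /\ d `<=` UEn k.
    move=> k; exists (H b1 k `&` setT); split.
      exists b1, k, setT; split => //; [exact: openT | exact: filterT].
    by move=> z [/Hsub].
  have hne : forall d, D d -> d !=set0.
    move=> d [b [n [Oo [Bb oO GO ->]]]].
    have [a [Oa Ka]] := filter_ex (filterI GO GK).
    have [z [Hz Oz]] := Ka b Bb n Oo (open_nbhs_nbhs (conj oO Oa)).
    by exists z.
  have hdir : forall d1 d2, D d1 -> D d2 -> exists d3, D d3 /\ d3 `<=` d1 `&` d2.
    move=> d1 d2 [c1 [n1 [Oa1 [Bc1 oO1 GO1 ->]]]] [c2 [n2 [Oa2 [Bc2 oO2 GO2 ->]]]].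
    have [c3 Bc3 sc3] := bdir c1 c2 Bc1 Bc2.
    exists (H c3 (maxn n1 n2) `&` (Oa1 `&` Oa2)); split.
      exists c3, (maxn n1 n2), (Oa1 `&` Oa2); split => //; [exact: openI | exact: filterI].
    move=> z [Hz [Hz1 Hz2]]; split; split => //.
    - by apply: (Hmono c1 c3 n1 (maxn n1 n2) _ (leq_maxl _ _)) Hz => t /sc3 [].
    - by apply: (Hmono c2 c3 n2 (maxn n1 n2) _ (leq_maxr _ _)) Hz => t /sc3 [].
  have [x clx] := @KC X A U pi hS E hE D hlev hne hdir.
  exists x; split.
    move=> b Bb n; have : closure (H b n `&` setT) x.
      apply: clx; exists b, n, setT; split => //; [exact: openT | exact: filterT].
    by apply: closureS => z [].
  move=> As N GA Nx; apply: contrapT => nAN.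
  have [_ hreg] := hX.
  have cC : closed (~` N°) by apply: open_closedC; exact: open_interior.
  have nCx : ~ (~` N°) x by move=> h; apply: h; exact: nbhs_singleton (nbhs_interior Nx).
  have [f [cf [fx0 f1]]] := hreg _ x cC nCx.
  pose Oo := f @^-1` [set r | (1/2 < r)%R].
  have oO : open Oo.
    apply: ((proj1 (continuousP f)) cf [set r | (1/2 < r)%R]); exact: open_gt.
  have AO : As `<=` Oo.
    move=> a Aa; rewrite /Oo /= f1; first lra.
    move=> Na; apply: nAN; exists a; split => //; exact: interior_subset.
  have GO : G Oo := filterS AO GA.
  have : closure (H b1 0 `&` Oo) x.
    apply: clx; exists b1, 0%N, Oo; split; [exact: Bb1|exact: oO|exact: GO|by []].
  pose N' := f @^-1` [set r | (r < 1/2)%R].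
  have oN' : open N'.
    apply: ((proj1 (continuousP f)) cf [set r | (r < 1/2)%R]); exact: open_lt.
  have N'x : N' x by rewrite /N' /= fx0; lra.
  move=> /(_ N' (open_nbhs_nbhs (conj oN' N'x))) [z [[_ Oz] N'z]].
  move: Oz N'z; rewrite /Oo /N' /=; lra.
apply: (@FIN X Y F hF B hB (Cpt cK)) => W oW KW b Bb; exact: P.
Qed.
End MX.

Lemma list_of_seq (X : Type) (I : Type) (V : I -> set X) (S : set I)
   (L : list (set X)) :
  (forall e, List.In e L -> exists b, S b /\ V b = e) ->
  exists l : list I, (forall b, List.In b l -> S b) /\
    \bigcup_(b in [set b | List.In b l]) V b = \bigcup_(e in [set e | List.In e L]) e.
Proof.
elim: L => [|e L IH] H.
  exists nil; split => //; apply/seteqP; split => x [c []].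
have [b [Sb Vb]] := H e (or_introl erefl).
have [l [lS eql]] := IH (fun e' h => H e' (or_intror h)).
exists (b :: l); split; first by move=> c [<-|/lS].
apply/seteqP; split => x [c Hc Hx].
- case: Hc => [ec|lc].
    by exists e; [left | rewrite -Vb ec].
  have : (\bigcup_(b in [set b | List.In b l]) V b) x by exists c.
  by rewrite eql => -[e' He' Hx']; exists e'; [right|].
- case: Hc => [ec|lc].
    by exists b; [left | rewrite Vb ec].
  have : (\bigcup_(e in [set e | List.In e L]) e) x by exists c.
  by rewrite -eql => -[b' Hb' Hx']; exists b'; [right|].
Qed.

Lemma In_inP (T : eqType) (x : T) (s : list T) : List.In x s <-> x \in s.
Proof.
elim: s => [|y s IH] //=; rewrite seq.in_cons; split.
- by case=> [->|/IH ->]; rewrite ?eqxx ?orbT.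
- by case/orP => [/eqP ->|/IH]; [left|right].
Qed.

Lemma list_of_finite (X : choiceType) (I : Type) (V : I -> set X) (S : set I)
   (E'' : set (set X)) :
  finite_set E'' -> E'' `<=` [set V b | b in S] ->
  exists l : list I, (forall b, List.In b l -> S b) /\
    \bigcup_(b in [set b | List.In b l]) V b = \bigcup_(e in E'') e.
Proof.
move=> /finite_fsetP [X0 eX] sub.
have H : forall e, List.In e (X0 : list (set X)) -> exists b, S b /\ V b = e.
  move=> e /In_inP h; have : E'' e by rewrite eX.
  by move=> /sub [b Sb Vb]; exists b.
have [l [lS eql]] := @list_of_seq _ _ V S X0 H.
exists l; split => //; rewrite eql; apply/seteqP; split => x [c Hc Hx];
  exists c => //=.
- by rewrite eX; apply/In_inP.
- by apply/In_inP; move: Hc; rewrite eX.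
Qed.

Section SY.
Variables (X Y : topologicalType) (F : cpt X -> cpt Y).
Variables (A : nat -> Type) (U : forall n, A n -> set X) (pi : forall n, A n.+1 -> A n).
Hypothesis hS : complete_sieve U pi.
Variable s : set X -> set Y.
Hypothesis hsO : forall V, open V -> open (s V).
Hypothesis hs2 : s setT = setT.
Hypothesis hs3 : forall V W, open V -> open W -> V `<=` W -> s V `<=` s W.
Hypothesis hs4 : forall (V : set X) (y : Y) (W : set (set X)),
            open V -> s V y ->
            (forall w, W w -> open w) ->
            Fpre F y V `<=` \bigcup_(w in W) w ->
            exists E : set (set X),
              [/\ finite_set E, E `<=` W & s (\bigcup_(e in E) e) y].

Definition Pn (n : nat) (Ef : forall k, list (A k)) : Prop :=
  (forall k, (k < n)%N -> forall b, List.In b (Ef k.+1) -> List.In (pi k b) (Ef k)) /\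
  (forall k, (n < k)%N -> Ef k = nil).

Definition BY n := {Ef : forall k, list (A k) | Pn n Ef}.

Definition VY n (Ef : BY n) := s (UE X A U (proj1_sig Ef) n).

Definition trunc n (Ef : forall k, list (A k)) : forall k, list (A k) :=
  fun k => if (k <= n)%N then Ef k else nil.

Lemma Pn_trunc n Ef : Pn n.+1 Ef -> Pn n (trunc n Ef).
Proof.
move=> [h1 h2]; split.
- move=> k kn b; rewrite /trunc kn ltnW //; apply: h1; exact: ltnW.
- by move=> k nk; rewrite /trunc leqNgt nk.
Qed.

Definition piY n (Ef : BY n.+1) : BY n :=
  exist _ (trunc n (proj1_sig Ef)) (Pn_trunc _ _ (proj2_sig Ef)).

Lemma BY_eq n (E1 E2 : BY n) : proj1_sig E1 = proj1_sig E2 -> E1 = E2.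
Proof.
case: E1 E2 => [e1 p1] [e2 p2] /= ee; subst e2; congr exist; exact: Prop_irrelevance.
Qed.

Lemma UE_openY Ef n : open (UE X A U Ef n).
Proof. apply: bigcup_open => a _; case: hS => [[hO _ _] _]; exact: hO. Qed.

Lemma sieve_eqY n (Ef : BY n) :
  VY n Ef = \bigcup_(b in [set b | piY n b = Ef]) VY n.+1 b.
Proof.
have [[hO hC hU] _] := hS.
case: Ef => Ev PEv; apply/seteqP; split => y.
- move=> sy.
  pose W := [set U n.+1 b | b in [set b | List.In (pi n b) (Ev n)]].
  have Wo : forall w, W w -> open w by move=> w [b _ <-]; exact: hO.
  have cov : Fpre F y (UE X A U Ev n) `<=` \bigcup_(w in W) w.
    move=> x [K [_ KU Kx]]; have [a Ha Ux] := KU x Kx.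
    move: Ux; rewrite (hU n a) => -[b /= pb Ub].
    exists (U n.+1 b) => //; exists b => //=; by rewrite pb.
  have [E'' [fin sub sE]] := hs4 _ _ _ (UE_openY Ev n) sy Wo cov.
  have [l [lS eql]] := @list_of_finite X _ (U n.+1) _ E'' fin sub.
  pose Ef' := @dfwith nat (fun k => list (A k)) Ev n.+1 l.
  have Ef'i : Ef' n.+1 = l := dfwith_in _ _.
  have Ef'o : forall k, n.+1 != k -> Ef' k = Ev k.
    by move=> k h; apply: dfwith_out.
  have P' : Pn n.+1 Ef'.
    have [p1 p2] := PEv; split.
    + move=> k kn b; case: (eqVneq k n) => [ekn|kn'].
        subst k.
        rewrite Ef'i Ef'o; last by lia.
        exact: lS.
      rewrite !Ef'o; try lia.
      apply: p1; lia.
    + move=> k nk; rewrite Ef'o; last by lia.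
      apply: p2; lia.
  exists (exist _ Ef' P').
    apply: BY_eq => /=; apply: functional_extensionality_dep => k.
    rewrite /trunc; case: ifP => kn.
      rewrite Ef'o //; lia.
    have [_ p2] := PEv; rewrite p2 //; lia.
  rewrite /VY /UE /= Ef'i.
  by rewrite eql.
- move=> [[E' PE'] /= eE' sy].
  rewrite /VY /=; apply: (hs3 _ _ (UE_openY _ _) (UE_openY _ _) _ y sy).
  move=> x [b Hb Ux]; exists (pi n b).
    have -> : Ev n = E' n.
      have := congr1 (fun e : BY n => proj1_sig e n) eE'.
      by rewrite /= /trunc leqnn.
    have [p1 _] := PE'; exact: p1.
  exact: (@U_pi X A U pi hS n b).
Qed.

Lemma is_sieveY : is_sieve VY piY.
Proof.
have [[hO hC hU] _] := hS.
split.
- move=> n Ef; apply: hsO; exact: UE_openY.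
- elim => [|n IH].
  + apply/seteqP; split => // y _.
    have sy : s setT y by rewrite hs2.
    pose W := [set U 0 a | a in [set: A 0]].
    have Wo : forall w, W w -> open w by move=> w [b _ <-]; exact: hO.
    have cov : Fpre F y setT `<=` \bigcup_(w in W) w.
      move=> x _; have : (\bigcup_(a in [set: A 0]) U 0 a) x by rewrite hC.
      by case=> a _ Ux; exists (U 0 a) => //; exists a.
    have [E'' [fin sub sE]] := hs4 _ _ _ openT sy Wo cov.
    have [l [_ eql]] := @list_of_finite X _ (U 0) _ E'' fin sub.
    pose Ef := @dfwith nat (fun k => list (A k)) (fun k => nil) 0 l.
    have Efo : forall k, 0 != k -> Ef k = nil.
      by move=> k h; apply: dfwith_out.
    have Efi : Ef 0 = l := dfwith_in _ _.
    have P0 : Pn 0 Ef.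
      split => // k k0; rewrite Efo //; lia.
    exists (exist _ Ef P0) => //.
    by rewrite /VY /UE /= Efi eql.
  + apply/seteqP; split => // y _.
    have : (\bigcup_(a in [set: BY n]) VY n a) y by rewrite IH.
    case=> a _; rewrite sieve_eqY => -[b _ Vb]; by exists b.
- exact: sieve_eqY.
Qed.

Hypothesis hX : completely_regular X.
Hypothesis hF : usc F.
Hypothesis hs1 : forall V, open V -> s V `<=` Fimg F V.

Lemma complete_sieveY : complete_sieve VY piY.
Proof.
split; first exact: is_sieveY.
move=> beta hbeta B hB hmesh.
pose Ek k := proj1_sig (beta k) k.
have Hk : forall m k, (k <= m)%N -> proj1_sig (beta m) k = Ek k.
  elim=> [|m IH] k km.
    by move: km; rewrite leqn0 => /eqP ->.
  case: (eqVneq k m.+1) => [->//|kn].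
  have km' : (k <= m)%N by lia.
  by rewrite -(IH k km') -(hbeta m) /= /trunc km'.
have hE : forall n b, List.In b (Ek n.+1) -> List.In (pi n b) (Ek n).
  move=> n b Hb; rewrite -(Hk n.+1 n (leqnSn n)).
  have [p1 _] := proj2_sig (beta n.+1); exact: p1.
apply: (@MX X Y F hX hF A U pi hS Ek hE s hs1 B hB).
move=> b n Bb; apply: hmesh => //; by exists n.
Qed.

End SY.

Theorem corollary3p6 (X Y : topologicalType) (F : cpt X -> cpt Y) :
  completely_regular X -> completely_regular Y ->
  sieve_complete X -> usc F -> set_tri_quotient F ->
  sieve_complete Y.
Proof.
move=> hX _ [A [U [pi hS]]] hF [s [hsO hs1 hs2 hs3 hs4]].
exists (@BY A pi), (@VY X Y A U pi s), (@piY A pi).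
exact: (@complete_sieveY X Y F A U pi hS s hsO hs2 hs3 hs4 hX hF hs1).
Qed.
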